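(* Fix $\alpha>0$. For each $N\ge 2$, let $T_1,\ldots,T_N$ be drawn independently and uniformly at random (i.e. with replacement) from $\{n\in\mathbb{N}: n\le e^{\alpha N}\}$, and let $\Gamma_{j,k}=\gcd(T_j,T_k)$. Then for every $\eta>0$, \[ \lim_{N\to\infty}\mathbb{P}\Big[N^{2-\eta}<\max_{1\le j<k\le N}\Gamma_{j,k}<N^{2+\eta}\Big]=1 . \] *)

(* Defs.v *)
From Stdlib Require Import Reals Lra Lia Arith List.
Open Scope R_scope.

(* M N = floor (exp (alpha * N)) : the sample space for each T_j is
   {n in N : 1 <= n <= exp(alpha N)} = {1, ..., M N}. *)
Definition sampleMax (alpha : R) (N : nat) : nat :=
  Z.to_nat (Int_part (exp (alpha * INR N))).

(* All lists of length N with entries in {1,...,M} (each exactly once):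
   the (M^N)-element uniform sample space of ordered N-tuples. *)
Fixpoint tuples (N M : nat) : list (list nat) :=
  match N with
  | O => nil :: nil
  | S k => flat_map (fun x => map (fun t => x :: t) (tuples k M)) (seq 1 M)
  end.

(* max_{1 <= j < k <= N} gcd(T_j, T_k)  (0 for lists with < 2 entries). *)
Fixpoint maxPairGcd (t : list nat) : nat :=
  match t with
  | nil => 0%nat
  | x :: r => Nat.max (fold_right (fun y acc => Nat.max (Nat.gcd x y) acc) 0%nat r)
                      (maxPairGcd r)
  end.

Definition Rltb (a b : R) : bool := if Rlt_dec a b then true else false.

Definition goodEvent (eta : R) (N : nat) (t : list nat) : bool :=
  Rltb (Rpower (INR N) (2 - eta)) (INR (maxPairGcd t)) &&
  Rltb (INR (maxPairGcd t)) (Rpower (INR N) (2 + eta)).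

Definition probGood (alpha eta : R) (N : nat) : R :=
  INR (length (filter (goodEvent eta N) (tuples N (sampleMax alpha N))))
  / INR (length (tuples N (sampleMax alpha N))).

(* Main.v *)
Require Import Defs.
From Stdlib Require Import Reals Lra Lia Psatz Arith List ZArith.
Open Scope R_scope.

Fixpoint sumL (l : list nat) (f : nat -> R) : R :=
  match l with nil => 0 | x :: r => f x + sumL r f end.

Lemma sumL_ext l f g : (forall x, In x l -> f x = g x) -> sumL l f = sumL l g.
Proof. induction l; simpl; intros H; auto. rewrite H, IHl; auto. Qed.
Lemma sumL_plus l f g : sumL l (fun x => f x + g x) = sumL l f + sumL l g.
Proof. induction l; simpl; lra. Qed.
Lemma sumL_scal l k f : sumL l (fun x => k * f x) = k * sumL l f.
Proof. induction l; simpl; [lra|rewrite IHl; ring]. Qed.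
Lemma sumL_const l k : sumL l (fun _ => k) = INR (length l) * k.
Proof. induction l; simpl length; [simpl; lra|]. rewrite S_INR; simpl; rewrite IHl; ring. Qed.
Lemma sumL_le l f g : (forall x, In x l -> f x <= g x) -> sumL l f <= sumL l g.
Proof. induction l; simpl; intros H; [lra|]. pose proof (H a (or_introl eq_refl)). 
  assert (sumL l f <= sumL l g) by auto. lra. Qed.
Lemma sumL_nonneg l f : (forall x, In x l -> 0 <= f x) -> 0 <= sumL l f.
Proof. intros H; rewrite <- (Rmult_0_r (INR (length l))), <- sumL_const; apply sumL_le; auto. Qed.
Lemma sumL_app l1 l2 f : sumL (l1 ++ l2) f = sumL l1 f + sumL l2 f.
Proof. induction l1; simpl; lra. Qed.
Lemma sumL_swap l1 l2 (G : nat -> nat -> R) :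
  sumL l1 (fun x => sumL l2 (G x)) = sumL l2 (fun y => sumL l1 (fun x => G x y)).
Proof. induction l1; simpl. - induction l2; simpl; lra.
  - rewrite IHl1, <- sumL_plus. reflexivity. Qed.
Lemma sumL_ge_term l f x : In x l -> (forall y, In y l -> 0 <= f y) -> f x <= sumL l f.
Proof. induction l; simpl; intros Hi H; [contradiction|]. destruct Hi as [<-|Hi].
  - assert (0 <= sumL l f) by (apply sumL_nonneg; auto). lra.
  - assert (f x <= sumL l f) by auto. pose proof (H a (or_introl eq_refl)). lra. Qed.

Definition avg (M : nat) (f : nat -> R) : R := sumL (seq 1 M) f / INR M.

Lemma avg_ext M f g : (forall x, f x = g x) -> avg M f = avg M g.
Proof. intros H; unfold avg; rewrite (sumL_ext _ f g); auto. Qed.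
Lemma avg_plus M f g : avg M (fun x => f x + g x) = avg M f + avg M g.
Proof. unfold avg, Rdiv; rewrite sumL_plus; ring. Qed.
Lemma avg_scal M k f : avg M (fun x => k * f x) = k * avg M f.
Proof. unfold avg, Rdiv; rewrite sumL_scal; ring. Qed.
Lemma avg_scalr M k f : avg M (fun x => f x * k) = avg M f * k.
Proof. rewrite (avg_ext M _ (fun x => k * f x)) by (intros; ring). rewrite avg_scal; ring. Qed.
Lemma avg_const M k : (0 < M)%nat -> avg M (fun _ => k) = k.
Proof. intros HM; unfold avg; rewrite sumL_const, length_seq.
  assert (0 < INR M) by (apply lt_0_INR; lia). field; lra. Qed.
Lemma avg_le M f g : (0 < M)%nat -> (forall x, (1 <= x <= M)%nat -> f x <= g x) -> avg M f <= avg M g.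
Proof. intros HM H; unfold avg, Rdiv. assert (0 < INR M) by (apply lt_0_INR; lia).
  apply Rmult_le_compat_r. left; apply Rinv_0_lt_compat; lra.
  apply sumL_le. intros x Hx; apply in_seq in Hx; apply H; lia. Qed.
Lemma avg_swap M N (G : nat -> nat -> R) :
  avg M (fun x => avg N (G x)) = avg N (fun y => avg M (fun x => G x y)).
Proof. unfold avg, Rdiv.
  rewrite (sumL_ext _ (fun x => sumL (seq 1 N) (G x) * / INR N) (fun x => / INR N * sumL (seq 1 N) (G x)))
   by (intros; ring).
  rewrite sumL_scal, sumL_swap.
  rewrite (sumL_ext (seq 1 N) (fun x => sumL (seq 1 M) (fun x0 => G x0 x) * / INR M)
        (fun x => / INR M * sumL (seq 1 M) (fun x0 => G x0 x))) by (intros; ring).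
  rewrite sumL_scal. ring. Qed.
Lemma avg_sumL M l (F : nat -> nat -> R) :
  avg M (fun y => sumL l (F y)) = sumL l (fun z => avg M (fun y => F y z)).
Proof. induction l; simpl. - unfold avg; rewrite (sumL_ext _ _ (fun _ => 0*0)) by (intros; ring).
  rewrite sumL_scal; unfold Rdiv; ring.
  - rewrite avg_plus, IHl. reflexivity. Qed.
Lemma avg_nonneg M f : (0 < M)%nat -> (forall x, (1 <= x <= M)%nat -> 0 <= f x) -> 0 <= avg M f.
Proof. intros HM H; rewrite <- (avg_const M 0 HM); apply avg_le; auto. Qed.

Fixpoint E (M n : nat) (F : list nat -> R) : R :=
  match n with O => F nil | S k => avg M (fun x => E M k (fun t => F (x :: t))) end.

Lemma E_ext M n F G : (forall t, F t = G t) -> E M n F = E M n G.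
Proof. revert F G; induction n; simpl; intros F G H; auto. apply avg_ext; intros; apply IHn; auto. Qed.
Lemma E_plus M n F G : E M n (fun t => F t + G t) = E M n F + E M n G.
Proof. revert F G; induction n; simpl; intros; auto. rewrite <- avg_plus; apply avg_ext; intros; apply IHn. Qed.
Lemma E_scal M n k F : E M n (fun t => k * F t) = k * E M n F.
Proof. revert F; induction n; simpl; intros; auto. rewrite <- avg_scal; apply avg_ext; intros; apply IHn. Qed.
Lemma E_const M n k : (0 < M)%nat -> E M n (fun _ => k) = k.
Proof. intros HM; induction n; simpl; auto. rewrite (avg_ext _ _ (fun _ => k)) by auto. apply avg_const; auto. Qed.
Lemma E_le M n F G : (0 < M)%nat -> (forall t, F t <= G t) -> E M n F <= E M n G.
Proof. intros HM; revert F G; induction n; simpl; intros F G H; auto. apply avg_le; auto. Qed.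
Lemma E_sumL M n l (F : nat -> list nat -> R) :
  E M n (fun t => sumL l (fun d => F d t)) = sumL l (fun d => E M n (F d)).
Proof. revert F; induction n; simpl; intros; auto.
  rewrite (avg_ext _ _ (fun x => sumL l (fun d => E M n (fun t => F d (x :: t))))) by (intros; apply IHn).
  apply avg_sumL. Qed.
Lemma E_avg M n (G : nat -> list nat -> R) :
  E M n (fun t => avg M (fun y => G y t)) = avg M (fun y => E M n (G y)).
Proof. unfold avg. rewrite (E_ext _ _ _ (fun t => / INR M * sumL (seq 1 M) (fun y => G y t)))
  by (intros; unfold Rdiv; ring). rewrite E_scal, E_sumL. unfold Rdiv; ring. Qed.

Fixpoint sumT (l : list (list nat)) (F : list nat -> R) : R :=
  match l with nil => 0 | t :: r => F t + sumT r F end.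

Lemma sumT_app l1 l2 F : sumT (l1 ++ l2) F = sumT l1 F + sumT l2 F.
Proof. induction l1; simpl; lra. Qed.
Lemma sumT_map x l F : sumT (map (fun t => x :: t) l) F = sumT l (fun t => F (x :: t)).
Proof. induction l; simpl; auto. rewrite IHl; auto. Qed.
Lemma sumT_flat l k M F :
  sumT (flat_map (fun x => map (fun t => x :: t) (tuples k M)) l) F
  = sumL l (fun x => sumT (tuples k M) (fun t => F (x :: t))).
Proof. induction l; simpl; auto. rewrite sumT_app, sumT_map, IHl; auto. Qed.

Lemma sumT_E M n F : (0 < M)%nat -> sumT (tuples n M) F = INR M ^ n * E M n F.
Proof. intros HM. assert (0 < INR M) by (apply lt_0_INR; lia). revert F; induction n; intros F.
  - simpl; ring.
  - simpl tuples; rewrite sumT_flat. simpl E. unfold avg.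
    rewrite (sumL_ext _ _ (fun x => INR M ^ n * E M n (fun t => F (x :: t)))) by (intros; apply IHn).
    rewrite sumL_scal. simpl pow. field. lra. Qed.

Lemma len_filter_sumT (p : list nat -> bool) l :
  INR (length (filter p l)) = sumT l (fun t => if p t then 1 else 0).
Proof. induction l; [simpl; auto|]. cbn [filter sumT]. destruct (p a); cbn [length]; rewrite <- IHl; [rewrite S_INR|]; ring. Qed.
Lemma len_sumT (l : list (list nat)) : INR (length l) = sumT l (fun _ => 1).
Proof. induction l; [simpl; auto|]. cbn [length sumT]. rewrite S_INR, IHl; ring. Qed.

Lemma probGood_E alpha eta N : (0 < sampleMax alpha N)%nat ->
  probGood alpha eta N = E (sampleMax alpha N) N (fun t => if goodEvent eta N t then 1 else 0).
Proof. intros HM. unfold probGood. rewrite len_filter_sumT, len_sumT, !sumT_E by auto.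
  rewrite E_const by auto. assert (0 < INR (sampleMax alpha N)) by (apply lt_0_INR; lia).
  field. apply pow_nonzero; lra. Qed.

Fixpoint Xs (c : nat -> nat -> R) (t : list nat) : R :=
  match t with nil => 0 | x :: r => sumL r (c x) + Xs c r end.

Lemma L3 M n f : (0 < M)%nat -> E M n (fun t => sumL t f) = INR n * avg M f.
Proof. intros HM; induction n; simpl; [ring|].
  rewrite (avg_ext _ _ (fun x => f x + INR n * avg M f)).
  2:{ intros x. rewrite E_plus, E_const, IHn; auto. }
  rewrite avg_plus, avg_const by auto. destruct n; simpl; ring. Qed.

Lemma L4 M n (g : nat -> nat -> R) : (0 < M)%nat ->
  E M n (fun t => sumL t (fun y => sumL t (g y))) =
  INR n * avg M (fun y => g y y) + INR n * (INR n - 1) * avg M (fun y => avg M (g y)).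
Proof. intros HM; induction n; simpl E; [simpl; ring|].
  rewrite (avg_ext _ _ (fun x => g x x + INR n * avg M (g x) + INR n * avg M (fun y => g y x)
      + (INR n * avg M (fun y => g y y) + INR n * (INR n - 1) * avg M (fun y => avg M (g y))))).
  2:{ intros x. rewrite <- IHn.
      rewrite (E_ext _ _ _ (fun t => g x x + sumL t (g x) + sumL t (fun y => g y x)
               + sumL t (fun y => sumL t (g y)))).
      2:{ intros t; simpl. rewrite sumL_plus. ring. }
      rewrite !E_plus, E_const, !L3 by auto. ring. }
  rewrite !avg_plus, !avg_scal, !avg_const by auto.
  rewrite (avg_swap M M (fun x y => g y x)). replace (avg M (fun y => avg M (fun x => g y x))) with (avg M (fun y => avg M (g y))) by reflexivity. rewrite S_INR; ring. Qed.

Lemma L5 M n c : (0 < M)%nat ->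
  E M n (Xs c) = INR n * (INR n - 1) / 2 * avg M (fun x => avg M (c x)).
Proof. intros HM; induction n; simpl E; [simpl; field|].
  rewrite (avg_ext _ _ (fun x => INR n * avg M (c x) + INR n * (INR n - 1) / 2 * avg M (fun x => avg M (c x)))).
  2:{ intros x. simpl. rewrite E_plus, L3, IHn by auto. reflexivity. }
  rewrite avg_plus, avg_scal, avg_const by auto. rewrite S_INR; field. Qed.

Section Sym.
End Sym.

Lemma avg_prod M f g : avg M (fun y => avg M (fun z => f y * g z)) = avg M f * avg M g.
Proof. rewrite (avg_ext _ _ (fun y => f y * avg M g)) by (intros; apply avg_scal).
  apply avg_scalr. Qed.

Lemma L6 M n c : (0 < M)%nat -> (forall x y, c x y = c y x) ->
  let h := fun y => avg M (c y) in
  E M n (fun t => sumL t h * Xs c t) =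
  INR n * (INR n - 1) * avg M (fun y => h y * h y)
  + INR n * (INR n - 1) * (INR n - 2) / 2 * (avg M h * avg M h).
Proof. intros HM Hs h; induction n; simpl E; [simpl; field|].
  set (nu := avg M (fun y => h y * h y)). set (mu := avg M h).
  assert (Hsw : forall r, avg M (fun y => sumL r h * sumL r (c y)) = sumL r h * sumL r h).
  { intros r. rewrite avg_scal, avg_sumL. f_equal. apply sumL_ext; intros z _. unfold h.
    apply avg_ext; intros; apply Hs. }
  rewrite (avg_ext _ _ (fun y => (h y * (INR n * h y) + h y * (INR n * (INR n - 1) / 2 * mu))
     + E M n (fun r => sumL r h * sumL r (c y)) + E M n (fun r => sumL r h * Xs c r))).
  2:{ intros y. simpl.
      rewrite (E_ext _ _ _ (fun t => h y * sumL t (c y) + h y * Xs c t + sumL t h * sumL t (c y)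
              + sumL t h * Xs c t)) by (intros; ring).
      rewrite !E_plus, !E_scal, L3, L5 by auto. reflexivity. }
  rewrite !avg_plus. rewrite <- E_avg.
  rewrite (E_ext _ _ _ (fun t => sumL t (fun y => sumL t (fun z => h y * h z)))).
  2:{ intros t. rewrite Hsw. rewrite <- sumL_scal.
      apply sumL_ext; intros; rewrite Rmult_comm, <- sumL_scal. reflexivity. }
  rewrite L4, IHn by auto. rewrite avg_const by auto.
  rewrite avg_prod.
  rewrite (avg_ext _ (fun x => h x * (INR n * h x)) (fun x => INR n * (h x * h x))) by (intros; ring).
  rewrite (avg_ext _ (fun x => h x * (INR n * (INR n - 1) / 2 * mu)) (fun x => (INR n * (INR n - 1) / 2 * mu) * h x)) by (intros; ring).
  rewrite !avg_scal. fold nu mu. rewrite S_INR. field. Qed.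

Lemma L7 M n c : (0 < M)%nat -> (forall x y, c x y = c y x) ->
  let h := fun y => avg M (c y) in
  E M n (fun t => Xs c t * Xs c t) =
  INR n * (INR n - 1) / 2 * avg M (fun x => avg M (fun y => c x y * c x y))
  + INR n * (INR n - 1) * (INR n - 2) * avg M (fun y => h y * h y)
  + INR n * (INR n - 1) * (INR n - 2) * (INR n - 3) / 4 * (avg M h * avg M h).
Proof. intros HM Hs h; induction n; simpl E; [simpl; field|].
  set (nu := avg M (fun y => h y * h y)). set (mu := avg M h).
  set (tau := avg M (fun x => avg M (fun y => c x y * c x y))).
  rewrite (avg_ext _ _ (fun x => (INR n * avg M (fun y => c x y * c x y) + INR n * (INR n - 1) * (h x * h x))
     + 2 * E M n (fun r => sumL r (c x) * Xs c r) + E M n (fun r => Xs c r * Xs c r))).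
  2:{ intros x. simpl.
      rewrite (E_ext _ _ _ (fun t => sumL t (fun y => sumL t (fun z => c x y * c x z))
          + 2 * (sumL t (c x) * Xs c t) + Xs c t * Xs c t)).
      2:{ intros t. assert (Hq : forall (f : nat -> R), sumL t f * sumL t f = sumL t (fun y => sumL t (fun z => f y * f z))).
          { intros f. rewrite <- sumL_scal. apply sumL_ext; intros; rewrite Rmult_comm, <- sumL_scal; reflexivity. }
          rewrite <- (Hq (c x)). ring. }
      rewrite !E_plus, E_scal, L4 by auto. rewrite avg_prod. reflexivity. }
  rewrite !avg_plus, !avg_scal. rewrite <- E_avg.
  rewrite (E_ext _ _ _ (fun t => sumL t h * Xs c t)).
  2:{ intros t. rewrite avg_scalr, avg_sumL. f_equal. apply sumL_ext; intros z _. unfold h.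
      apply avg_ext; intros; apply Hs. }
  pose proof (L6 M n c HM Hs) as H6; cbv zeta in H6; change (fun y => avg M (c y)) with h in H6. rewrite H6, IHn. fold h nu mu tau. rewrite avg_const by auto. rewrite S_INR. field. Qed.

Definition dv (d x : nat) : R := if andb (Nat.ltb 0 x) (Nat.eqb (x mod d) 0) then 1 else 0.

Lemma dv_01 d x : 0 <= dv d x <= 1.
Proof. unfold dv; destruct (andb _ _); lra. Qed.

Lemma dv_true d x : (0 < d)%nat -> dv d x = 1 <-> (0 < x)%nat /\ Nat.divide d x.
Proof. intros Hd; unfold dv. destruct (Nat.ltb 0 x) eqn:E1; destruct (Nat.eqb (x mod d) 0) eqn:E2; simpl;
  apply Nat.ltb_lt in E1 || apply Nat.ltb_ge in E1;
  apply Nat.eqb_eq in E2 || apply Nat.eqb_neq in E2;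
  split; intros H; try lra; try split; auto; try (apply Nat.mod_divide; auto; lia);
  destruct H as [H1 H2]; try lia; apply Nat.mod_divide in H2; lia. Qed.

Lemma dv_cases d x : dv d x = 0 \/ dv d x = 1.
Proof. unfold dv; destruct (andb _ _); auto. Qed.

Lemma div_S m d : (0 < d)%nat ->
  (S m / d = m / d + (if Nat.eqb (S m mod d) 0 then 1 else 0))%nat.
Proof. intros Hd. pose proof (Nat.div_mod m d ltac:(lia)). pose proof (Nat.mod_upper_bound m d ltac:(lia)).
  set (q := (m / d)%nat) in *. set (r := (m mod d)%nat) in *.
  destruct (Nat.eq_dec (S r) d) as [E|E].
  - assert (S m = d * (q + 1))%nat by lia.
    assert (S m mod d = 0)%nat by (rewrite H1, Nat.mul_comm; apply Nat.Div0.mod_mul).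
    rewrite H2; simpl. rewrite H1, Nat.mul_comm, Nat.div_mul by lia. lia.
  - assert (S m = d * q + S r)%nat by lia.
    assert (S m mod d = S r)%nat by (rewrite H1; symmetry; apply (Nat.mod_unique _ _ q); lia).
    assert (S m / d = q)%nat by (rewrite H1; symmetry; apply (Nat.div_unique _ _ _ (S r)); lia).
    rewrite H2, H3. destruct (Nat.eqb_spec (S r) 0); lia. Qed.

Lemma cnt_div M d : (0 < d)%nat -> sumL (seq 1 M) (dv d) = INR (M / d).
Proof. intros Hd; induction M.
  - simpl. rewrite Nat.Div0.div_0_l. simpl; auto.
  - rewrite seq_S, sumL_app, IHM. simpl sumL. rewrite (div_S M d Hd), plus_INR.
    unfold dv. replace (1 + M)%nat with (S M) by lia. simpl Nat.ltb. simpl andb.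
    destruct (Nat.eqb (S M mod d) 0); simpl; ring. Qed.

Lemma avg_dv_le M d : (0 < M)%nat -> (0 < d)%nat -> avg M (dv d) <= / INR d.
Proof. intros HM Hd; unfold avg; rewrite cnt_div by auto.
  assert (0 < INR M) by (apply lt_0_INR; lia). assert (0 < INR d) by (apply lt_0_INR; lia).
  pose proof (Nat.Div0.mul_div_le M d) as H1. apply le_INR in H1. rewrite mult_INR in H1.
  apply (Rmult_le_reg_r (INR M * INR d)). nra. field_simplify; try lra. Qed.

Lemma avg_dv_ge M d : (0 < M)%nat -> (0 < d)%nat -> / INR d - / INR M <= avg M (dv d).
Proof. intros HM Hd; unfold avg; rewrite cnt_div by auto.
  assert (0 < INR M) by (apply lt_0_INR; lia). assert (0 < INR d) by (apply lt_0_INR; lia).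
  pose proof (Nat.div_mod M d ltac:(lia)) as H2. pose proof (Nat.mod_upper_bound M d ltac:(lia)) as H3.
  assert (H4 : (M < d * (M / d) + d)%nat) by lia. apply lt_INR in H4. rewrite plus_INR, mult_INR in H4.
  apply (Rmult_le_reg_r (INR M * INR d)). nra. field_simplify; try lra. Qed.

Lemma dv_mul d d' x : (0 < d)%nat -> (0 < d')%nat -> dv d x * dv d' x = dv (Nat.lcm d d') x.
Proof. intros Hd Hd'. assert (Hl : (0 < Nat.lcm d d')%nat).
  { destruct (Nat.eq_dec (Nat.lcm d d') 0) as [E|E]; [|lia]. apply Nat.lcm_eq_0 in E. lia. }
  destruct (dv_cases (Nat.lcm d d') x) as [E|E].
  - destruct (dv_cases d x) as [E1|E1]; [rewrite E1; lra|].
    destruct (dv_cases d' x) as [E2|E2]; [rewrite E2; lra|].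
    apply dv_true in E1; auto. apply dv_true in E2; auto. exfalso.
    assert (dv (Nat.lcm d d') x = 1) by (apply dv_true; auto; split; [tauto|apply Nat.lcm_divide_iff; tauto]). lra.
  - rewrite E. apply dv_true in E; auto. destruct E as [Ex Hdiv]. apply Nat.lcm_divide_iff in Hdiv.
    assert (dv d x = 1) by (apply dv_true; tauto). assert (dv d' x = 1) by (apply dv_true; tauto).
    rewrite H, H0; ring. Qed.

Lemma gcd_mul_lcm' d d' : (0 < d')%nat -> (Nat.gcd d d' * Nat.lcm d d' = d * d')%nat.
Proof. intros Hd'. destruct (Nat.gcd_divide_r d d') as [k Hk].
  assert (Hg : Nat.gcd d d' <> 0%nat) by (intros E; apply Nat.gcd_eq_0 in E; lia).
  unfold Nat.lcm. rewrite Hk at 2. rewrite Nat.div_mul by auto. rewrite Hk at 2. ring. Qed.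

Lemma inv_lcm d d' : (0 < d)%nat -> (0 < d')%nat ->
  / INR (Nat.lcm d d') = INR (Nat.gcd d d') / (INR d * INR d').
Proof. intros Hd Hd'. pose proof (gcd_mul_lcm' d d' Hd'). apply (f_equal INR) in H. rewrite !mult_INR in H.
  assert (0 < INR d) by (apply lt_0_INR; lia). assert (0 < INR d') by (apply lt_0_INR; lia).
  assert (INR (Nat.lcm d d') <> 0).
  { intros E. rewrite E in H. nra. }
  field_simplify_eq; auto. lra. split; lra. Qed.

Definition cL (a : nat) (x y : nat) : R := sumL (seq a a) (fun d => dv d x * dv d y).

Lemma cL_sym a x y : cL a x y = cL a y x.
Proof. unfold cL; apply sumL_ext; intros; ring. Qed.

Lemma in_seq_pos a d : (0 < a)%nat -> In d (seq a a) -> (0 < d)%nat.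
Proof. intros Ha H; apply in_seq in H; lia. Qed.

Lemma hL_eq M a y : avg M (cL a y) = sumL (seq a a) (fun d => dv d y * avg M (dv d)).
Proof. unfold cL. rewrite avg_sumL. apply sumL_ext; intros. apply avg_scal. Qed.

Lemma mu_eq M a : avg M (fun y => avg M (cL a y)) = sumL (seq a a) (fun d => avg M (dv d) * avg M (dv d)).
Proof. rewrite (avg_ext _ _ _ (hL_eq M a)). rewrite avg_sumL. apply sumL_ext; intros.
  apply avg_scalr. Qed.

Lemma mu_ge M a : (0 < a)%nat -> (4 * a <= M)%nat ->
  / (16 * INR a) <= avg M (fun y => avg M (cL a y)).
Proof. intros Ha HM. rewrite mu_eq.
  assert (0 < INR a) by (apply lt_0_INR; lia).
  assert (4 * INR a <= INR M) by (replace 4 with (INR 4) by (simpl; ring); rewrite <- mult_INR; apply le_INR; lia).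
  apply Rle_trans with (sumL (seq a a) (fun _ => / (4 * INR a) * / (4 * INR a))).
  - rewrite sumL_const, length_seq. right; field; lra.
  - apply sumL_le. intros d Hd. apply in_seq in Hd.
    assert (0 < INR d) by (apply lt_0_INR; lia).
    assert (INR d <= 2 * INR a) by (replace 2 with (INR 2) by (simpl; ring); rewrite <- mult_INR; apply le_INR; lia).
    pose proof (avg_dv_ge M d ltac:(lia) ltac:(lia)).
    assert (/ (4 * INR a) <= / INR d - / INR M).
    { assert (/ INR M <= / (4 * INR a)) by (apply Rinv_le_contravar; lra).
      assert (/ (2 * INR a) <= / INR d) by (apply Rinv_le_contravar; lra).
      assert (/ (2 * INR a) = 2 * / (4 * INR a)) by (field; lra). lra. }
    assert (0 <= / (4 * INR a)) by (left; apply Rinv_0_lt_compat; lra).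
    apply Rmult_le_compat; lra. Qed.

Lemma sumS_le a f : (0 < a)%nat -> (forall x, 0 <= f x) ->
  sumL (seq a a) f <= sumL (seq 1 (2 * a)) f.
Proof. intros Ha Hf. replace (2 * a)%nat with ((a - 1) + (a + 1))%nat by lia.
  rewrite seq_app, sumL_app. replace (1 + (a - 1))%nat with a by lia.
  replace (a + 1)%nat with (a + 1)%nat by lia. rewrite seq_app, sumL_app.
  assert (0 <= sumL (seq 1 (a - 1)) f) by (apply sumL_nonneg; auto).
  assert (0 <= sumL (seq (a + a) 1) f) by (apply sumL_nonneg; auto). lra. Qed.

Lemma gcd_sum_bound a (w : nat -> R) : (0 < a)%nat -> (forall g, 0 <= w g) ->
  sumL (seq a a) (fun d => sumL (seq a a) (fun d' => w (Nat.gcd d d')))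
  <= sumL (seq 1 (2 * a)) (fun g => w g * (INR (2 * a / g) * INR (2 * a / g))).
Proof. intros Ha Hw.
  apply Rle_trans with (sumL (seq a a) (fun d => sumL (seq a a) (fun d' =>
      sumL (seq 1 (2 * a)) (fun g => w g * (dv g d * dv g d'))))).
  { apply sumL_le; intros d Hd; apply sumL_le; intros d' Hd'.
    apply in_seq in Hd, Hd'.
    assert (Hg : (0 < Nat.gcd d d')%nat).
    { destruct (Nat.eq_dec (Nat.gcd d d') 0) as [E|E]; [apply Nat.gcd_eq_0 in E; lia|lia]. }
    assert (Hgd : (Nat.gcd d d' <= d)%nat) by (apply Nat.divide_pos_le; [lia| apply Nat.gcd_divide_l]).
    assert (E1 : dv (Nat.gcd d d') d = 1) by (apply dv_true; auto; split; [lia|apply Nat.gcd_divide_l]).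
    assert (E2 : dv (Nat.gcd d d') d' = 1) by (apply dv_true; auto; split; [lia|apply Nat.gcd_divide_r]).
    eapply Rle_trans; [|apply (sumL_ge_term _ _ (Nat.gcd d d'))].
    - cbv beta; rewrite E1, E2; lra.
    - apply in_seq; lia.
    - intros y _. pose proof (dv_01 y d); pose proof (dv_01 y d'); pose proof (Hw y).
      apply Rmult_le_pos; auto; nra. }
  rewrite (sumL_ext _ _ (fun d => sumL (seq 1 (2 * a)) (fun g => sumL (seq a a) (fun d' => w g * (dv g d * dv g d')))))
    by (intros; apply sumL_swap).
  rewrite sumL_swap. apply sumL_le; intros g Hg. apply in_seq in Hg.
  rewrite (sumL_ext _ _ (fun d => (w g * dv g d) * sumL (seq a a) (dv g))).
  2:{ intros; rewrite <- sumL_scal; apply sumL_ext; intros; ring. }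
  rewrite (sumL_ext _ _ (fun d => (w g * sumL (seq a a) (dv g)) * dv g d)) by (intros; ring).
  rewrite sumL_scal.
  assert (H1 : sumL (seq a a) (dv g) <= INR (2 * a / g)).
  { rewrite <- cnt_div by lia. apply sumS_le; auto. intros; apply dv_01. }
  assert (H0 : 0 <= sumL (seq a a) (dv g)) by (apply sumL_nonneg; intros; apply dv_01).
  pose proof (Hw g). assert (0 <= w g * sumL (seq a a) (dv g)) by nra.
  apply Rle_trans with (w g * sumL (seq a a) (dv g) * INR (2 * a / g)). 
  - apply Rmult_le_compat_l; auto.
  - rewrite <- Rmult_assoc. apply Rmult_le_compat_r; [apply pos_INR|]. apply Rmult_le_compat_l; auto. Qed.

Lemma sq_sum (l : list nat) f : sumL l f * sumL l f = sumL l (fun y => sumL l (fun z => f y * f z)).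
Proof. rewrite <- sumL_scal. apply sumL_ext; intros; rewrite Rmult_comm, <- sumL_scal; reflexivity. Qed.

Lemma inv_lcm_le a d d' : (0 < a)%nat -> In d (seq a a) -> In d' (seq a a) ->
  / INR (Nat.lcm d d') <= INR (Nat.gcd d d') / (INR a * INR a).
Proof. intros Ha Hd Hd'. apply in_seq in Hd, Hd'. rewrite inv_lcm by lia.
  assert (0 < INR a) by (apply lt_0_INR; lia).
  assert (INR a <= INR d) by (apply le_INR; lia). assert (INR a <= INR d') by (apply le_INR; lia).
  unfold Rdiv. apply Rmult_le_compat_l; [apply pos_INR|]. apply Rinv_le_contravar; nra. Qed.

Lemma lcm_pos d d' : (0 < d)%nat -> (0 < d')%nat -> (0 < Nat.lcm d d')%nat.
Proof. intros. destruct (Nat.eq_dec (Nat.lcm d d') 0) as [E|E]; [|lia]. apply Nat.lcm_eq_0 in E. lia. Qed.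

Lemma h_bound M a y : (0 < M)%nat -> (0 < a)%nat ->
  0 <= avg M (cL a y) <= / INR a * sumL (seq a a) (fun d => dv d y).
Proof. intros HM Ha. rewrite hL_eq. assert (0 < INR a) by (apply lt_0_INR; lia). split.
  - apply sumL_nonneg; intros d Hd. pose proof (dv_01 d y).
    apply Rmult_le_pos; [lra|]. apply avg_nonneg; auto; intros; apply dv_01.
  - rewrite <- sumL_scal. apply sumL_le; intros d Hd. apply in_seq in Hd.
    pose proof (dv_01 d y). pose proof (avg_dv_le M d HM ltac:(lia)).
    assert (/ INR d <= / INR a) by (apply Rinv_le_contravar; auto; apply le_INR; lia).
    rewrite Rmult_comm. apply Rmult_le_compat_r; lra. Qed.

Lemma nu_le M a : (0 < M)%nat -> (0 < a)%nat ->
  avg M (fun y => avg M (cL a y) * avg M (cL a y)) <=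
  / (INR a * INR a * INR a * INR a) *
  sumL (seq a a) (fun d => sumL (seq a a) (fun d' => INR (Nat.gcd d d'))).
Proof. intros HM Ha. assert (0 < INR a) by (apply lt_0_INR; lia).
  apply Rle_trans with (avg M (fun y => / (INR a * INR a) *
     sumL (seq a a) (fun d => sumL (seq a a) (fun d' => dv (Nat.lcm d d') y)))).
  { apply avg_le; auto. intros y _. destruct (h_bound M a y HM Ha) as [H0 H1].
    apply Rle_trans with ((/ INR a * sumL (seq a a) (fun d => dv d y)) * (/ INR a * sumL (seq a a) (fun d => dv d y))).
    { apply Rmult_le_compat; lra. }
    right. rewrite Rinv_mult. 
    replace (/ INR a * sumL (seq a a) (fun d => dv d y) * (/ INR a * sumL (seq a a) (fun d => dv d y)))
      with (/ INR a * / INR a * (sumL (seq a a) (fun d => dv d y) * sumL (seq a a) (fun d => dv d y))) by ring.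
    f_equal. rewrite sq_sum. apply sumL_ext; intros d Hd; apply sumL_ext; intros d' Hd'.
    apply dv_mul; eapply in_seq_pos; eauto. }
  rewrite avg_scal, avg_sumL. rewrite (sumL_ext _ _ (fun d => sumL (seq a a) (fun d' => avg M (dv (Nat.lcm d d')))))
    by (intros; apply avg_sumL).
  replace (/ (INR a * INR a * INR a * INR a)) with (/ (INR a * INR a) * / (INR a * INR a)) by (field; lra).
  rewrite Rmult_assoc. apply Rmult_le_compat_l. { left; apply Rinv_0_lt_compat; nra. }
  rewrite <- sumL_scal. apply sumL_le; intros d Hd. rewrite <- sumL_scal. apply sumL_le; intros d' Hd'.
  pose proof (in_seq_pos a d Ha Hd). pose proof (in_seq_pos a d' Ha Hd').
  eapply Rle_trans. apply avg_dv_le; auto. apply lcm_pos; auto.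
  eapply Rle_trans. apply (inv_lcm_le a d d'); auto. right; unfold Rdiv; ring. Qed.

Lemma tau_le M a : (0 < M)%nat -> (0 < a)%nat ->
  avg M (fun x => avg M (fun y => cL a x y * cL a x y)) <=
  / (INR a * INR a * INR a * INR a) *
  sumL (seq a a) (fun d => sumL (seq a a) (fun d' => INR (Nat.gcd d d') * INR (Nat.gcd d d'))).
Proof. intros HM Ha. assert (0 < INR a) by (apply lt_0_INR; lia).
  rewrite (avg_ext _ _ (fun x => avg M (fun y => sumL (seq a a) (fun d => sumL (seq a a) (fun d' =>
        dv (Nat.lcm d d') x * dv (Nat.lcm d d') y))))).
  2:{ intros x. apply avg_ext; intros y. unfold cL. rewrite sq_sum.
      apply sumL_ext; intros d Hd; apply sumL_ext; intros d' Hd'.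
      pose proof (in_seq_pos a d Ha Hd). pose proof (in_seq_pos a d' Ha Hd').
      rewrite <- !dv_mul by auto. ring. }
  rewrite (avg_ext _ _ (fun x => sumL (seq a a) (fun d => sumL (seq a a) (fun d' =>
        avg M (fun y => dv (Nat.lcm d d') x * dv (Nat.lcm d d') y))))).
  2:{ intros x. rewrite avg_sumL. apply sumL_ext; intros; apply avg_sumL. }
  rewrite avg_sumL. rewrite (sumL_ext _ _ (fun d => sumL (seq a a) (fun d' =>
        avg M (fun x => avg M (fun y => dv (Nat.lcm d d') x * dv (Nat.lcm d d') y))))) by (intros; apply avg_sumL).
  rewrite <- sumL_scal. apply sumL_le; intros d Hd. rewrite <- sumL_scal. apply sumL_le; intros d' Hd'.
  pose proof (in_seq_pos a d Ha Hd). pose proof (in_seq_pos a d' Ha Hd').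
  rewrite avg_prod. pose proof (lcm_pos d d' H0 H1).
  pose proof (avg_dv_le M _ HM H2). assert (0 <= avg M (dv (Nat.lcm d d'))) by (apply avg_nonneg; auto; intros; apply dv_01).
  pose proof (inv_lcm_le a d d' Ha Hd Hd').
  apply Rle_trans with ((INR (Nat.gcd d d') / (INR a * INR a)) * (INR (Nat.gcd d d') / (INR a * INR a))).
  - apply Rmult_le_compat; lra.
  - right; field; lra. Qed.

Lemma gq_le K g : (0 < g)%nat -> INR g * INR (K / g) <= INR K.
Proof. intros Hg. rewrite <- mult_INR. apply le_INR. apply Nat.Div0.mul_div_le. Qed.

Lemma G2_le a : (0 < a)%nat ->
  sumL (seq a a) (fun d => sumL (seq a a) (fun d' => INR (Nat.gcd d d') * INR (Nat.gcd d d')))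
  <= 8 * (INR a * INR a * INR a).
Proof. intros Ha. eapply Rle_trans. apply (gcd_sum_bound a (fun g => INR g * INR g)); auto.
  { intros; apply Rmult_le_pos; apply pos_INR. }
  apply Rle_trans with (sumL (seq 1 (2 * a)) (fun _ => INR (2 * a) * INR (2 * a))).
  - apply sumL_le; intros g Hg. apply in_seq in Hg.
    pose proof (gq_le (2 * a) g ltac:(lia)). pose proof (pos_INR g). pose proof (pos_INR (2 * a / g)).
    replace (INR g * INR g * (INR (2 * a / g) * INR (2 * a / g))) with
      ((INR g * INR (2 * a / g)) * (INR g * INR (2 * a / g))) by ring.
    apply Rmult_le_compat; nra.
  - rewrite sumL_const, length_seq, mult_INR. simpl. lra. Qed.

Definition Hs (K : nat) : R := sumL (seq 1 K) (fun g => / INR g).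

Lemma G1_le a : (0 < a)%nat ->
  sumL (seq a a) (fun d => sumL (seq a a) (fun d' => INR (Nat.gcd d d')))
  <= 4 * (INR a * INR a) * Hs (2 * a).
Proof. intros Ha. eapply Rle_trans. apply (gcd_sum_bound a (fun g => INR g)); auto.
  { intros; apply pos_INR. }
  unfold Hs. rewrite <- sumL_scal. apply sumL_le; intros g Hg. apply in_seq in Hg.
  pose proof (gq_le (2 * a) g ltac:(lia)). pose proof (pos_INR (2 * a / g)).
  assert (0 < INR g) by (apply lt_0_INR; lia).
  rewrite mult_INR in H. simpl (INR 2) in H.
  apply (Rmult_le_reg_l (INR g)); auto.
  replace (INR g * (INR g * (INR (2 * a / g) * INR (2 * a / g)))) with
      ((INR g * INR (2 * a / g)) * (INR g * INR (2 * a / g))) by ring.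
  replace (INR g * (4 * (INR a * INR a) * / INR g)) with ((2 * INR a) * (2 * INR a)) by (field; lra).
  apply Rmult_le_compat; nra. Qed.

Lemma Hs_le K : Hs K <= 2 * sqrt (INR K).
Proof. induction K. - unfold Hs; simpl. rewrite sqrt_0; lra.
  - unfold Hs in *. rewrite seq_S, sumL_app. cbn [sumL]. replace (1 + K)%nat with (S K) by lia.
    rewrite S_INR. pose proof (pos_INR K).
    assert (Hs1 : sqrt (INR K) <= sqrt (INR K + 1)) by (apply sqrt_le_1; lra).
    assert (Hs2 : 0 <= sqrt (INR K)) by apply sqrt_pos.
    assert (Hs3 : sqrt (INR K + 1) * sqrt (INR K + 1) = INR K + 1) by (apply sqrt_sqrt; lra).
    assert (Hs4 : sqrt (INR K) * sqrt (INR K) = INR K) by (apply sqrt_sqrt; lra).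
    assert (1 <= sqrt (INR K + 1)) by (apply (Rle_trans _ (sqrt 1)); [rewrite sqrt_1; lra| apply sqrt_le_1; lra]).
    assert (/ (INR K + 1) <= 2 * (sqrt (INR K + 1) - sqrt (INR K))).
    { set (u := sqrt (INR K + 1)) in *. set (v := sqrt (INR K)) in *.
      assert (u - v = / (u + v)) by (field_simplify_eq; nra).
      rewrite H1. apply (Rmult_le_reg_l (u+v)); [lra|]. 
      replace ((u + v) * (2 * / (u + v))) with 2 by (field; lra).
      rewrite <- Hs3. apply (Rmult_le_reg_l (u*u)); [nra|]. field_simplify; nra. }
    lra. Qed.

Definition ind (P : Prop) (d : {P} + {~ P}) : R := if d then 1 else 0.
Definition cg (U : R) (x y : nat) : R := if Rle_dec U (INR (Nat.gcd x y)) then 1 else 0.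

Lemma cg_nonneg U x y : 0 <= cg U x y.
Proof. unfold cg; destruct Rle_dec; lra. Qed.

Lemma tail_sum U M : 1 <= U ->
  sumL (seq 1 M) (fun g => (if Rle_dec U (INR g) then 1 else 0) * (/ INR g * / INR g))
  <= (if Rle_dec U (INR M) then 2 / U - / INR M else 0).
Proof. intros HU. induction M.
  - simpl. destruct Rle_dec; simpl in *; lra.
  - rewrite seq_S, sumL_app. cbn [sumL]. replace (1 + M)%nat with (S M) by lia.
    pose proof (pos_INR M). rewrite S_INR in *.
    destruct (Rle_dec U (INR M + 1)) as [H1|H1]; destruct (Rle_dec U (INR M)) as [H2|H2]; try lra.
    + assert (0 < INR M) by lra.
      assert (/ (INR M + 1) * / (INR M + 1) <= / INR M - / (INR M + 1)).
      { apply (Rmult_le_reg_l (INR M * (INR M + 1) * (INR M + 1))). nra. field_simplify; nra. }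
      lra.
    + assert (0 < INR M + 1) by lra.
      assert (/ (INR M + 1) <= / U) by (apply Rinv_le_contravar; lra).
      assert (/ (INR M + 1) * / (INR M + 1) <= / (INR M + 1)).
      { apply (Rmult_le_reg_l ((INR M + 1) * (INR M + 1))). nra. field_simplify; nra. }
      unfold Rdiv. lra.
    Qed.

Lemma pi_le M U : (0 < M)%nat -> 1 <= U ->
  avg M (fun x => avg M (cg U x)) <= 2 / U.
Proof. intros HM HU.
  apply Rle_trans with (avg M (fun x => avg M (fun y => sumL (seq 1 M) (fun g =>
     (if Rle_dec U (INR g) then 1 else 0) * (dv g x * dv g y))))).
  { apply avg_le; auto; intros x Hx; apply avg_le; auto; intros y Hy. unfold cg.
    destruct Rle_dec as [Hg|Hg].
    - set (g := Nat.gcd x y).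
      assert (Hg0 : (0 < g)%nat) by (destruct (Nat.eq_dec g 0) as [E|E]; [apply Nat.gcd_eq_0 in E; lia|lia]).
      assert (Hgx : (g <= x)%nat) by (apply Nat.divide_pos_le; [lia|apply Nat.gcd_divide_l]).
      eapply Rle_trans; [|apply (sumL_ge_term _ _ g)].
      + cbv beta. destruct Rle_dec; [|contradiction].
        assert (dv g x = 1) by (apply dv_true; auto; split; [lia|apply Nat.gcd_divide_l]).
        assert (dv g y = 1) by (apply dv_true; auto; split; [lia|apply Nat.gcd_divide_r]).
        rewrite H, H0; lra.
      + apply in_seq; lia.
      + intros z _. pose proof (dv_01 z x); pose proof (dv_01 z y). destruct Rle_dec; nra.
    - apply sumL_nonneg; intros z _. pose proof (dv_01 z x); pose proof (dv_01 z y). destruct Rle_dec; nra. }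
  rewrite (avg_ext _ _ (fun x => sumL (seq 1 M) (fun g => avg M (fun y => 
     (if Rle_dec U (INR g) then 1 else 0) * (dv g x * dv g y))))) by (intros; apply avg_sumL).
  rewrite avg_sumL.
  eapply Rle_trans; [|eapply Rle_trans; [apply (tail_sum U M HU)|]].
  - apply sumL_le; intros g Hg. apply in_seq in Hg.
    rewrite (avg_ext _ _ (fun x => avg M (fun y => ((if Rle_dec U (INR g) then 1 else 0) * dv g x) * dv g y)))
      by (intros; apply avg_ext; intros; ring).
    rewrite avg_prod, avg_scal. pose proof (avg_dv_le M g HM ltac:(lia)).
    assert (0 <= avg M (dv g)) by (apply avg_nonneg; auto; intros; apply dv_01).
    rewrite Rmult_assoc. destruct Rle_dec; [|lra]. rewrite !Rmult_1_l. apply Rmult_le_compat; lra.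
  - destruct Rle_dec; [|unfold Rdiv; assert (0 < / U) by (apply Rinv_0_lt_compat; lra); lra].
    assert (0 < INR M) by (apply lt_0_INR; lia). assert (0 < / INR M) by (apply Rinv_0_lt_compat; lra). lra. Qed.

Definition foldg (x : nat) (r : list nat) : nat :=
  fold_right (fun y acc => Nat.max (Nat.gcd x y) acc) 0%nat r.

Lemma INR_max a b : INR (Nat.max a b) = Rmax (INR a) (INR b).
Proof. destruct (Nat.le_ge_cases a b).
  - rewrite Nat.max_r by auto. rewrite Rmax_right; auto. apply le_INR; auto.
  - rewrite Nat.max_l by auto. rewrite Rmax_left; auto. apply le_INR; auto. Qed.

Lemma foldg_cg U x r : 0 < U -> (if Rle_dec U (INR (foldg x r)) then 1 else 0) <= sumL r (cg U x).
Proof. intros HU. induction r as [|a r IHr].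
  - simpl. destruct Rle_dec as [Q|Q]; simpl in Q; lra.
  - assert (E : foldg x (a :: r) = Nat.max (Nat.gcd x a) (foldg x r)) by reflexivity.
    rewrite E. cbn [sumL]. rewrite INR_max.
    assert (0 <= sumL r (cg U x)) by (apply sumL_nonneg; intros; apply cg_nonneg).
    pose proof (cg_nonneg U x a).
    destruct (Rle_dec U (Rmax (INR (Nat.gcd x a)) (INR (foldg x r)))) as [H1|H1]; [|lra].
    unfold Rmax in H1. destruct (Rle_dec (INR (Nat.gcd x a)) (INR (foldg x r))).
    + destruct (Rle_dec U (INR (foldg x r))); lra.
    + assert (cg U x a = 1) by (unfold cg; destruct (Rle_dec U (INR (Nat.gcd x a))); [reflexivity|lra]). lra. Qed.

Lemma Xs_nonneg c t : (forall x y, 0 <= c x y) -> 0 <= Xs c t.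
Proof. intros Hc; induction t; simpl; [lra|]. assert (0 <= sumL t (c a)) by (apply sumL_nonneg; auto). lra. Qed.

Lemma mpg_cg U t : 0 < U -> (if Rle_dec U (INR (maxPairGcd t)) then 1 else 0) <= Xs (cg U) t.
Proof. intros HU. induction t as [|a t IHt].
  - simpl. destruct Rle_dec as [Q|Q]; simpl in Q; lra.
  - assert (E : maxPairGcd (a :: t) = Nat.max (foldg a t) (maxPairGcd t)) by reflexivity.
    rewrite E. cbn [Xs]. rewrite INR_max. pose proof (foldg_cg U a t HU) as F.
    assert (0 <= Xs (cg U) t) by (apply Xs_nonneg; apply cg_nonneg).
    assert (0 <= sumL t (cg U a)) by (apply sumL_nonneg; intros; apply cg_nonneg).
    destruct (Rle_dec U (Rmax (INR (foldg a t)) (INR (maxPairGcd t)))) as [Q1|Q1]; [|lra].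
    unfold Rmax in Q1. destruct (Rle_dec (INR (foldg a t)) (INR (maxPairGcd t))).
    + destruct (Rle_dec U (INR (maxPairGcd t))); lra.
    + destruct (Rle_dec U (INR (foldg a t))); lra. Qed.

Lemma cL_zero a x y : (0 < a)%nat -> (Nat.gcd x y < a)%nat -> cL a x y = 0.
Proof. intros Ha Hg. unfold cL. rewrite <- (Rmult_0_r (INR (length (seq a a)))), <- sumL_const.
  apply sumL_ext; intros d Hd. apply in_seq in Hd.
  destruct (dv_cases d x) as [E|E]; [rewrite E; ring|].
  destruct (dv_cases d y) as [E'|E']; [rewrite E'; ring|].
  apply dv_true in E; [|lia]. apply dv_true in E'; [|lia]. exfalso.
  assert (Nat.divide d (Nat.gcd x y)) by (apply Nat.gcd_greatest; tauto).
  assert (0 < Nat.gcd x y)%nat by (destruct (Nat.eq_dec (Nat.gcd x y) 0) as [Q|Q]; [apply Nat.gcd_eq_0 in Q; lia|lia]).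
  apply Nat.divide_pos_le in H; lia. Qed.

Lemma foldg_ge x r y : In y r -> (Nat.gcd x y <= foldg x r)%nat.
Proof. induction r; simpl; [tauto|]. intros [<-|H]; unfold foldg in *; simpl; [lia|]. specialize (IHr H); lia. Qed.

Lemma mpg_zero a t : (0 < a)%nat -> (maxPairGcd t < a)%nat -> Xs (cL a) t = 0.
Proof. intros Ha. induction t; simpl; [auto|].
  change (fold_right (fun y acc => Nat.max (Nat.gcd a0 y) acc) 0%nat t) with (foldg a0 t).
  intros H. rewrite IHt by lia. rewrite Rplus_0_r.
  rewrite <- (Rmult_0_r (INR (length t))), <- sumL_const.
  apply sumL_ext; intros y Hy. apply cL_zero; auto. pose proof (foldg_ge a0 t y Hy). lia. Qed.

Lemma E_ind_le1 M n (F : list nat -> R) : (0 < M)%nat -> (forall t, F t <= 1) -> E M n F <= 1.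
Proof. intros HM H. rewrite <- (E_const M n 1 HM). apply E_le; auto. Qed.

Lemma main_bound M n a U L eta N :
  (0 < a)%nat -> (4 * a <= M)%nat -> (2 <= n)%nat -> 1 <= U -> L < INR a ->
  Rpower (INR N) (2 - eta) = L -> Rpower (INR N) (2 + eta) = U ->
  1 - E M n (fun t => if goodEvent eta N t then 1 else 0)
  <= 16384 * INR a / (INR n * INR n) + 32768 * sqrt (2 * INR a) / INR n
     + INR n * INR n / U.
Proof. intros Ha HaM Hn HU HLa EL EU.
  assert (HM : (0 < M)%nat) by lia.
  assert (Hra : 0 < INR a) by (apply lt_0_INR; lia).
  assert (Hrn : 2 <= INR n) by (replace 2 with (INR 2) by (simpl; ring); apply le_INR; auto).
  set (c := cL a). set (X := Xs c). set (h := fun y => avg M (c y)).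
  set (mu := avg M h). set (nu := avg M (fun y => h y * h y)).
  set (tau := avg M (fun x => avg M (fun y => c x y * c x y))).
  set (m := INR n * (INR n - 1) / 2 * mu).
  assert (Hmu : / (16 * INR a) <= mu) by (apply mu_ge; auto).
  assert (Hmupos : 0 < / (16 * INR a)) by (apply Rinv_0_lt_compat; lra).
  assert (Hm : INR n * INR n / (64 * INR a) <= m).
  { unfold m. apply Rle_trans with (INR n * (INR n - 1) / 2 * / (16 * INR a)).
    - apply (Rmult_le_reg_l (64 * INR a)). lra. field_simplify; nra.
    - apply Rmult_le_compat_l; auto. apply Rmult_le_pos; nra. }
  assert (Hm0 : 0 < m).
  { eapply Rlt_le_trans; [|exact Hm]. apply Rdiv_lt_0_compat; nra. }
  assert (Hpw : forall t, 1 - (X t - m) * (X t - m) / (m * m) - Xs (cg U) t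
                 <= (if goodEvent eta N t then 1 else 0)).
  { intros t. pose proof (mpg_cg U t ltac:(lra)) as HB.
    assert (0 <= Xs (cg U) t) by (apply Xs_nonneg; apply cg_nonneg).
    assert (0 <= (X t - m) * (X t - m) / (m * m)) by (unfold Rdiv; apply Rmult_le_pos; [apply Rle_0_sqr| left; apply Rinv_0_lt_compat; apply Rmult_lt_0_compat; exact Hm0]).
    destruct (Nat.lt_ge_cases (maxPairGcd t) a) as [Hl|Hl].
    - unfold X, c. rewrite mpg_zero by auto.
      replace ((0 - m) * (0 - m) / (m * m)) with 1 by (field; lra).
      destruct (goodEvent eta N t); lra.
    - apply le_INR in Hl.
      unfold goodEvent, Rltb. rewrite EL, EU.
      destruct (Rlt_dec L (INR (maxPairGcd t))); [|lra].
      destruct (Rlt_dec (INR (maxPairGcd t)) U); simpl; [lra|].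
      destruct (Rle_dec U (INR (maxPairGcd t))); lra. }
  set (Z := fun t => (X t - m) * (X t - m) / (m * m) + Xs (cg U) t).
  assert (H1 : E M n (fun t => 1 + (-1) * Z t) <= E M n (fun t => if goodEvent eta N t then 1 else 0)).
  { apply E_le; auto. intros t. unfold Z. specialize (Hpw t). lra. }
  rewrite E_plus, E_scal, E_const in H1 by auto.
  assert (H2 : E M n Z <= 16384 * INR a / (INR n * INR n) + 32768 * sqrt (2 * INR a) / INR n
     + INR n * INR n / U).
  { unfold Z. rewrite E_plus.
    rewrite (E_ext _ _ _ (fun t => / (m * m) * (X t * X t + (-2 * m) * X t + m * m))) by (intros; field; lra).
    rewrite E_scal, !E_plus, E_scal, E_const by auto.
    assert (EX : E M n X = m) by (unfold X, m; rewrite L5 by auto; reflexivity).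
    pose proof (L7 M n c HM (cL_sym a)) as H7; cbv zeta in H7.
    change (fun y => avg M (c y)) with h in H7. fold mu nu tau in H7. fold X in H7.
    rewrite EX, H7.
    pose proof (L5 M n (cg U) HM) as H5. rewrite H5.
    pose proof (pi_le M U HM HU) as Hpi.
    assert (Hpi0 : 0 <= avg M (fun x => avg M (cg U x))).
    { apply avg_nonneg; auto; intros; apply avg_nonneg; auto; intros; apply cg_nonneg. }
    assert (Htau : tau <= 8 / INR a).
    { eapply Rle_trans. apply tau_le; auto.
      apply Rle_trans with (/ (INR a * INR a * INR a * INR a) * (8 * (INR a * INR a * INR a))).
      apply Rmult_le_compat_l; [left; apply Rinv_0_lt_compat; repeat apply Rmult_lt_0_compat; lra| apply G2_le; auto].
      right; field; lra. }
    assert (Hsq : 0 <= sqrt (2 * INR a)) by apply sqrt_pos.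
    assert (Hnu : nu <= 8 * sqrt (2 * INR a) / (INR a * INR a)).
    { eapply Rle_trans. apply nu_le; auto.
      apply Rle_trans with (/ (INR a * INR a * INR a * INR a) * (4 * (INR a * INR a) * Hs (2 * a))).
      apply Rmult_le_compat_l; [left; apply Rinv_0_lt_compat; repeat apply Rmult_lt_0_compat; lra| apply G1_le; auto].
      pose proof (Hs_le (2 * a)) as Hsl. rewrite mult_INR in Hsl. replace (INR 2) with 2 in Hsl by (simpl; ring).
      assert (0 <= Hs (2 * a)) by (unfold Hs; apply sumL_nonneg; intros g Hg; apply in_seq in Hg; left; apply Rinv_0_lt_compat, lt_0_INR; lia).
      apply Rle_trans with (/ (INR a * INR a * INR a * INR a) * (4 * (INR a * INR a) * (2 * sqrt (2 * INR a)))).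
      - apply Rmult_le_compat_l; [left; apply Rinv_0_lt_compat; repeat apply Rmult_lt_0_compat; lra|]. apply Rmult_le_compat_l. nra. lra.
      - right; field; lra. }
    assert (Htau0 : 0 <= tau).
    { unfold tau. apply avg_nonneg; auto; intros; apply avg_nonneg; auto; intros; apply Rle_0_sqr. }
    assert (Hnu0 : 0 <= nu).
    { unfold nu. apply avg_nonneg; auto; intros; apply Rle_0_sqr. }
    set (nn := INR n) in *.
    assert (HV : nn * (nn - 1) / 2 * tau + nn * (nn - 1) * (nn - 2) * nu +
       nn * (nn - 1) * (nn - 2) * (nn - 3) / 4 * (mu * mu) + -2 * m * m + m * m
       <= nn * nn / 2 * (8 / INR a) + nn * nn * nn * (8 * sqrt (2 * INR a) / (INR a * INR a))).
    { unfold m. assert (0 <= mu * mu) by apply Rle_0_sqr.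
      assert (nn * (nn - 1) / 2 * tau <= nn * nn / 2 * (8 / INR a)).
      { apply Rmult_le_compat; try nra. }
      assert (nn * (nn - 1) * (nn - 2) * nu <= nn * nn * nn * (8 * sqrt (2 * INR a) / (INR a * INR a))).
      { apply Rmult_le_compat; try nra. apply Rmult_le_pos; nra. }
      assert (nn * (nn - 1) * (nn - 2) * (nn - 3) / 4 * (mu * mu) <= (nn * (nn - 1) / 2 * mu) * (nn * (nn - 1) / 2 * mu)).
      { replace ((nn * (nn - 1) / 2 * mu) * (nn * (nn - 1) / 2 * mu)) with (nn * (nn - 1) * (nn * (nn - 1)) / 4 * (mu * mu)) by field.
        apply Rmult_le_compat_r; auto. assert (0 <= nn * (nn - 1)) by nra. nra. }
      nra. }
    assert (Hmm : / (m * m) <= (64 * INR a) * (64 * INR a) / (nn * nn * nn * nn)).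
    { replace ((64 * INR a) * (64 * INR a) / (nn * nn * nn * nn)) with (/ ((nn * nn / (64 * INR a)) * (nn * nn / (64 * INR a)))) by (field; nra).
      apply Rinv_le_contravar. apply Rmult_lt_0_compat; apply Rdiv_lt_0_compat; nra.
      apply Rmult_le_compat; try nra. left; apply Rdiv_lt_0_compat; nra. left; apply Rdiv_lt_0_compat; nra. }
    set (V := nn * (nn - 1) / 2 * tau + nn * (nn - 1) * (nn - 2) * nu +
       nn * (nn - 1) * (nn - 2) * (nn - 3) / 4 * (mu * mu) + -2 * m * m + m * m) in *.
    set (Vb := nn * nn / 2 * (8 / INR a) + nn * nn * nn * (8 * sqrt (2 * INR a) / (INR a * INR a))) in *.
    assert (HVb : 0 <= Vb).
    { unfold Vb. apply Rplus_le_le_0_compat; apply Rmult_le_pos; try (unfold Rdiv; apply Rmult_le_pos; try nra; left; apply Rinv_0_lt_compat; nra); nra. }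
    assert (Hmm0 : 0 <= / (m * m)) by (left; apply Rinv_0_lt_compat; nra).
    assert (T1 : / (m * m) * V <= (64 * INR a) * (64 * INR a) / (nn * nn * nn * nn) * Vb).
    { apply Rle_trans with (/ (m * m) * Vb). apply Rmult_le_compat_l; auto. apply Rmult_le_compat_r; auto. }
    assert (T2 : (64 * INR a) * (64 * INR a) / (nn * nn * nn * nn) * Vb = 16384 * INR a / (nn * nn) + 32768 * sqrt (2 * INR a) / nn).
    { unfold Vb. field. split; nra. }
    assert (T3 : nn * (nn - 1) / 2 * avg M (fun x : nat => avg M (cg U x)) <= nn * nn / U).
    { apply Rle_trans with (nn * (nn - 1) / 2 * (2 / U)). apply Rmult_le_compat_l; auto. apply Rmult_le_pos; nra.
      unfold Rdiv. assert (0 < / U) by (apply Rinv_0_lt_compat; lra). nra. }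
    lra. }
  lra.
Qed.

Lemma exp_le_mono x y : x <= y -> exp x <= exp y.
Proof. intros [H|H]; [left; apply exp_increasing; auto| subst; lra]. Qed.

Lemma sqrt_exp z : sqrt (exp (2 * z)) = exp z.
Proof. replace (2 * z) with (z + z) by ring. rewrite exp_plus. apply sqrt_square. left; apply exp_pos. Qed.

Lemma INR_Zto_nat z : (0 <= z)%Z -> INR (Z.to_nat z) = IZR z.
Proof. intros H. rewrite INR_IZR_INZ, Z2Nat.id; auto. Qed.

Lemma bound_N alpha eta N : 0 < alpha -> 0 < eta -> (2 <= N)%nat ->
  8 * (INR N * INR N) + 1 <= exp (alpha * INR N) ->
  1 - probGood alpha eta N <= 98305 * exp (- (Rmin eta 1 / 2) * ln (INR N))
  /\ probGood alpha eta N <= 1.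
Proof. intros Ha He HN Hexp.
  set (e := Rmin eta 1). assert (He1 : 0 < e <= 1) by (unfold e, Rmin; destruct Rle_dec; lra).
  assert (Hee : e <= eta) by (unfold e, Rmin; destruct Rle_dec; lra).
  assert (HN2 : 2 <= INR N) by (replace 2 with (INR 2) by (simpl; ring); apply le_INR; auto).
  set (l := ln (INR N)).
  assert (Hl : 0 < l) by (unfold l; rewrite <- ln_1; apply ln_increasing; lra).
  assert (HNl : INR N = exp l) by (unfold l; rewrite exp_ln; lra).
  set (D := exp ((2 - e) * l)).
  assert (HD1 : 1 <= D) by (unfold D; rewrite <- exp_0; apply exp_le_mono; nra).
  assert (HDN : D <= INR N * INR N) by (unfold D; rewrite HNl, <- exp_plus; apply exp_le_mono; nra).
  destruct (archimed D) as [Hup1 Hup2].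
  assert (Hup0 : (0 <= up D)%Z) by (apply le_IZR; lra).
  set (a := Z.to_nat (up D)).
  assert (Ha' : INR a = IZR (up D)) by (apply INR_Zto_nat; auto).
  assert (Hapos : (0 < a)%nat) by (apply INR_lt; simpl; lra).
  set (M := sampleMax alpha N).
  destruct (base_Int_part (exp (alpha * INR N))) as [Hi1 Hi2].
  assert (Hi0 : (0 <= Int_part (exp (alpha * INR N)))%Z) by (apply le_IZR; lra).
  assert (HM : INR M = IZR (Int_part (exp (alpha * INR N)))) by (apply INR_Zto_nat; auto).
  assert (H4a : (4 * a <= M)%nat).
  { apply INR_le. rewrite mult_INR, HM, Ha'. simpl (INR 4). lra. }
  assert (HM0 : (0 < M)%nat) by lia.
  assert (EL : Rpower (INR N) (2 - eta) = Rpower (INR N) (2 - eta)) by reflexivity.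
  pose proof (main_bound M N a (Rpower (INR N) (2 + eta)) (Rpower (INR N) (2 - eta)) eta N Hapos H4a HN) as MB.
  assert (HU : 1 <= Rpower (INR N) (2 + eta)).
  { unfold Rpower. fold l. rewrite <- exp_0. apply exp_le_mono. nra. }
  assert (HLa : Rpower (INR N) (2 - eta) < INR a).
  { unfold Rpower. fold l. apply Rle_lt_trans with D; [|lra]. unfold D. apply exp_le_mono. nra. }
  specialize (MB HU HLa eq_refl eq_refl).
  unfold M in MB. rewrite <- probGood_E in MB by auto.
  split.
  2:{ rewrite probGood_E by auto. apply E_ind_le1; auto. intros; destruct goodEvent; lra. }
  eapply Rle_trans; [exact MB|].
  set (s := e / 2).
  assert (Hes : exp (- e * l) <= exp (- s * l)) by (apply exp_le_mono; unfold s; nra).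
  assert (T1 : INR a / (INR N * INR N) <= 2 * exp (- e * l)).
  { assert (INR a <= 2 * D) by lra.
    rewrite HNl, <- exp_plus. unfold Rdiv. rewrite <- exp_Ropp.
    replace (- (l + l)) with (- 2 * l) by ring.
    replace (- e * l) with ((2 - e) * l + - 2 * l) by ring. rewrite exp_plus. fold D.
    pose proof (exp_pos (-2 * l)). nra. }
  assert (T2 : sqrt (2 * INR a) / INR N <= 2 * exp (- s * l)).
  { assert (2 * INR a <= 4 * D) by lra.
    assert (sqrt (2 * INR a) <= sqrt (4 * D)) by (apply sqrt_le_1; lra).
    assert (sqrt (4 * D) = 2 * exp ((1 - s) * l)).
    { rewrite sqrt_mult by lra. replace 4 with (2 * 2) by ring. rewrite sqrt_square by lra.
      unfold D. replace ((2 - e) * l) with (2 * ((1 - s) * l)) by (unfold s; field). rewrite sqrt_exp. reflexivity. }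
    rewrite HNl. unfold Rdiv. rewrite <- exp_Ropp.
    replace (- s * l) with ((1 - s) * l + - l) by ring. rewrite exp_plus.
    pose proof (exp_pos (- l)). nra. }
  assert (T3 : INR N * INR N / Rpower (INR N) (2 + eta) <= exp (- s * l)).
  { unfold Rpower. fold l. rewrite HNl, <- exp_plus. unfold Rdiv. rewrite <- exp_Ropp, <- exp_plus.
    apply exp_le_mono. unfold s. nra. }
  fold e. fold l. fold s. lra. Qed.

Lemma up_bound r N : 0 < r -> (Z.to_nat (up r) <= N)%nat -> r < INR N.
Proof. intros Hr HN. destruct (archimed r) as [H1 H2].
  assert (H0 : (0 <= up r)%Z) by (apply le_IZR; lra).
  apply le_INR in HN. rewrite INR_Zto_nat in HN by auto. lra. Qed.

Lemma growth alpha N : 0 < alpha -> (2 <= N)%nat -> 243 / (alpha * alpha * alpha) < INR N ->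
  8 * (INR N * INR N) + 1 <= exp (alpha * INR N).
Proof. intros Ha HN HN'.
  assert (HN2 : 2 <= INR N) by (replace 2 with (INR 2) by (simpl; ring); apply le_INR; auto).
  set (x := alpha * INR N / 3).
  assert (Hx : 0 < x) by (unfold x; nra).
  assert (E3 : exp (alpha * INR N) = exp x * exp x * exp x) by (rewrite <- !exp_plus; f_equal; unfold x; field).
  pose proof (exp_ineq1_le x). 
  assert (Ha3 : 0 < alpha * alpha * alpha) by (repeat apply Rmult_lt_0_compat; lra).
  assert (243 <= alpha * alpha * alpha * INR N).
  { apply (Rmult_lt_compat_l (alpha * alpha * alpha)) in HN'; auto.
    replace (alpha * alpha * alpha * (243 / (alpha * alpha * alpha))) with 243 in HN' by (field; lra). lra. }
  assert (x * x * x <= exp x * exp x * exp x).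
  { assert (x <= exp x) by lra. assert (0 <= x * x) by nra. apply Rmult_le_compat; [nra|lra| |lra]. apply Rmult_le_compat; lra. }
  assert (x * x * x = alpha * alpha * alpha * INR N * (INR N * INR N) / 27) by (unfold x; field).
  assert (243 * (INR N * INR N) / 27 <= x * x * x).
  { rewrite H2. apply Rmult_le_compat_r; [lra|]. apply Rmult_le_compat_r; nra. }
  nra. Qed.

Theorem theorem1p1 (alpha : R) (halpha : 0 < alpha) (eta : R) (heta : 0 < eta) :
  Un_cv (fun N : nat => probGood alpha eta N) 1.
Proof. intros eps Heps.
  set (s := Rmin eta 1 / 2).
  assert (Hs : 0 < s) by (unfold s, Rmin; destruct Rle_dec; lra).
  set (T := - ln (eps / 98305) / s).
  exists (Nat.max 2 (Nat.max (Z.to_nat (up (243 / (alpha * alpha * alpha)))) (Z.to_nat (up (exp T))))).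
  intros N HN.
  assert (HN2 : (2 <= N)%nat) by lia.
  assert (Hg : 243 / (alpha * alpha * alpha) < INR N).
  { apply up_bound; [|lia]. apply Rdiv_lt_0_compat; [lra|]. repeat apply Rmult_lt_0_compat; lra. }
  assert (HT : exp T < INR N) by (apply up_bound; [apply exp_pos|lia]).
  destruct (bound_N alpha eta N halpha heta HN2 (growth alpha N halpha HN2 Hg)) as [B1 B2].
  fold s in B1.
  assert (HlnN : T < ln (INR N)).
  { rewrite <- (ln_exp T). apply ln_increasing; [apply exp_pos|auto]. }
  assert (Hk : exp (- s * ln (INR N)) < eps / 98305).
  { rewrite <- (exp_ln (eps / 98305)) by lra. apply exp_increasing.
    unfold T in HlnN. apply (Rmult_lt_compat_l s) in HlnN; auto.
    replace (s * (- ln (eps / 98305) / s)) with (- ln (eps / 98305)) in HlnN by (field; lra). lra. }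
  unfold R_dist. rewrite Rabs_left1 by lra. lra. Qed.
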